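(* Let $G=(V,E)$ be a connected (finite, simple) graph and let $\mathcal{F}$ be a maximum induced forest of $G$ with vertex set $F$. Then there exists a vertex set $A\subseteq V\setminus F$ with $|A|\le 2|F|-2$ such that $G[F\cup A]$ is connected.
   Context: A maximum induced forest of $G$ is an induced subgraph $G[F]$ that is a forest and has the maximum possible number of vertices among all induced forests of $G$. *)

(* Defs.v *)
From mathcomp Require Import all_boot.
Set Implicit Arguments. Unset Strict Implicit. Unset Printing Implicit Defensive.

Definition simple_graph (V : finType) (e : rel V) : Prop :=
  symmetric e /\ irreflexive e.

Definition induced_connected (V : finType) (e : rel V) (S : {set V}) : Prop :=
  forall x y, x \in S -> y \in S ->
    exists p : seq V, [/\ path e x p, last x p = y & all (fun z => z \in S) p].

Definition connected_graph (V : finType) (e : rel V) : Prop :=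
  induced_connected e [set: V].

Definition induced_forest (V : finType) (e : rel V) (F : {set V}) : Prop :=
  ~ exists c : seq V,
      [/\ 3 <= size c, uniq c, all (fun z => z \in F) c & cycle e c].

Definition maximum_induced_forest (V : finType) (e : rel V) (F : {set V}) : Prop :=
  induced_forest e F /\
  forall F' : {set V}, induced_forest e F' -> #|F'| <= #|F|.

(* Main.v *)
Require Import Defs.
From mathcomp Require Import all_boot.
From mathcomp Require Import zify.
From Stdlib Require Import Classical_Prop.
Set Implicit Arguments. Unset Strict Implicit. Unset Printing Implicit Defensive.

Lemma ar1 n1 n2 n3 k : n3 <= k.+1 -> n1 <= n2 -> n3 = 1 + n2 -> n1 <= k.
Proof. lia. Qed.
Lemma ar2 (b : bool) n1 n2 n3 n4 n5 n6 n7 n8 :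
  n3 + 2 <= 2 * n8 -> n1 <= n2 -> n6 <= n7 -> n2 = n3 + n4 - n5 -> n4 = b.+1 ->
  n6 = 1 + n8 -> n1 + 2 <= 2 * n7.
Proof. case: b; lia. Qed.
Lemma ar3 n1 n2 : n1 + 2 <= 2 * n2 -> n1 <= 2 * n2 - 2.
Proof. lia. Qed.

Section Aux.
Variables (V : finType) (e : rel V).
Hypothesis esym : symmetric e.

Definition reach (S : {set V}) u v :=
  exists p : seq V, [/\ path e u p, last u p = v & all (fun z => z \in S) p].

Lemma reach_refl (S : {set V}) u : reach S u u.
Proof. by exists [::]. Qed.

Lemma reach_edge (S : {set V}) u v : e u v -> v \in S -> reach S u v.
Proof. by move=> huv hv; exists [:: v]; rewrite /= huv hv. Qed.

Lemma reach_trans (S : {set V}) u v w : reach S u v -> reach S v w -> reach S u w.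
Proof.
move=> [p [p1 p2 p3]] [q [q1 q2 q3]]; exists (p ++ q).
by rewrite cat_path last_cat p2 p1 q1 q2 all_cat p3 q3.
Qed.

Lemma reach_mono (S T : {set V}) u v : S \subset T -> reach S u v -> reach T u v.
Proof.
move=> /subsetP sST [p [p1 p2 p3]]; exists p; split=> //.
by apply: sub_all p3 => z /sST.
Qed.

Lemma conn_add (C : {set V}) x z : induced_connected e C -> x \in C -> (x == z) || e x z ->
  induced_connected e (z |: C).
Proof.
move=> hC xC /orP [/eqP <-|exz].
  by have -> : x |: C = C by apply/setP => y; rewrite !inE; case: eqP => // ->.
have sub : C \subset z |: C by apply/subsetP => y yC; rewrite inE yC orbT.
have toX : forall u, u \in z |: C -> reach (z |: C) u x.
  move=> u; rewrite !inE => /orP [/eqP ->|uC].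
    by apply: reach_edge; rewrite 1?esym // !inE xC orbT.
  by apply: reach_mono sub _; apply: hC.
have fromX : forall u, u \in z |: C -> reach (z |: C) x u.
  move=> u; rewrite !inE => /orP [/eqP ->|uC].
    by apply: reach_edge; rewrite ?inE ?eqxx.

  by apply: reach_mono sub _; apply: hC.
move=> u v hu hv; exact: reach_trans (toX u hu) (fromX v hv).
Qed.

Definition e' x y := (x == y) || e x y.

Lemma step (F C : {set V}) :
  (forall v, v \notin F -> exists2 w, w \in F & e v w) ->
  forall n c q y, size q <= n -> c \in C -> path e c (rcons q y) -> y \in F ->
  y \notin C ->
  exists c0 a b z, [/\ c0 \in C, z \in F, z \notin C & [/\ e' c0 a, e' a b & e' b z]].
Proof.
move=> nbr n; elim: n => [|n IH] c [|v1 [|v2 r]] y //= hs cC hp yF yC.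
- move: hp; rewrite andbT => hcy.
  by exists c, c, c, y; rewrite /e' !eqxx hcy orbT.
- move: hp; rewrite andbT => hcy.
  by exists c, c, c, y; rewrite /e' !eqxx hcy orbT.
- move: hp => /and3P [h1 h2 _].
  by exists c, c, v1, y; rewrite /e' !eqxx h1 h2 !orbT.
- move: hp => /and3P [h1 h2 hr].
  have [v2F|v2F] := boolP (v2 \in F).
    have [v2C|v2C] := boolP (v2 \in C).
      have hs' : size r <= n by rewrite ltnS in hs; apply: leq_trans hs.
      exact: (IH v2 r y hs' v2C hr yF yC).
    by exists c, v1, v1, v2; rewrite /e' !eqxx h1 h2 !orbT.
  have [w wF ew] := nbr v2 v2F.
  have [wC|wC] := boolP (w \in C).
    have hs' : size (v2 :: r) <= n by rewrite /= -ltnS.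
    have hp' : path e w (rcons (v2 :: r) y) by rewrite /= esym ew hr.
    exact: (IH w (v2 :: r) y hs' wC hp' yF yC).
  by exists c, v1, v2, w; rewrite /e' h1 h2 ew !orbT.
Qed.

End Aux.

Theorem lemma3 (V : finType) (e : rel V) (F : {set V}) :
  simple_graph e -> connected_graph e -> maximum_induced_forest e F ->
  exists A : {set V},
    [/\ A \subset ~: F, #|A| <= 2 * #|F| - 2 & induced_connected e (F :|: A)].
Proof.
move=> [esym eirr] hconn [hfor hmax].
have nbr : forall v, v \notin F -> exists2 w, w \in F & e v w.
  move=> v vF; have := hmax (v |: F); rewrite cardsU1 vF /= ltnn => hnot.
  have : ~ induced_forest e (v |: F) by move=> /hnot.
  rewrite /induced_forest => /Classical_Prop.NNPP [c [c3 cu call ccyc]].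
  have vc : v \in c.
    apply/negPn/negP => vnc; apply: hfor; exists c; split=> //.
    apply/allP => z zc; move/allP: call => /(_ z zc); rewrite inE.
    by case/orP => //; rewrite inE => hz; move: vnc; rewrite -(eqP hz) zc.
  exists (next c v); last exact: next_cycle ccyc vc.
  have : next c v \in v |: F by move/allP: call; apply; rewrite mem_next.
  rewrite inE => /orP [hv|//]; rewrite inE in hv.
  by have := next_cycle ccyc vc; rewrite (eqP hv) eirr.
have loop : forall k (C : {set V}), #|F :\: C| <= k -> induced_connected e C ->
    #|C :\: F| + 2 <= 2 * #|C :&: F| ->
    exists C' : {set V}, [/\ F \subset C', induced_connected e C' &
       #|C' :\: F| + 2 <= 2 * #|C' :&: F|].
  elim=> [|k IH] C hk hC hcard.
    exists C; split=> //; by rewrite -setD_eq0 -cards_eq0 -leqn0.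
  have [FC|FC] := boolP (F \subset C); first by exists C.
  have [y yFC] : exists y, y \in F :\: C.
    by apply/set0Pn; rewrite setD_eq0.
  have [x xCF] : exists x, x \in C :&: F.
    apply/set0Pn; rewrite -cards_eq0; apply/negP => /eqP h.
    by move: hcard; rewrite h muln0 addn2.
  move: yFC xCF; rewrite !inE => /andP [yC yF] /andP [xC xF].
  have [p [p1 p2 _]] := hconn x y (in_setT x) (in_setT y).
  case/lastP: p p1 p2 => [|q y'] p1 p2.
    by move: p2 => /= hxy; move: yC; rewrite -hxy xC.
  rewrite last_rcons in p2; subst y'.
  have [c0 [a [b [z [c0C zF zC [h1 h2 h3]]]]]] :=
    step esym nbr (leqnn (size q)) xC p1 yF yC.
  pose C' := z |: (b |: (a |: C)).
  have hC' : induced_connected e C'.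
    apply: (conn_add esym _ _ h3); last by rewrite !inE eqxx.
    apply: (conn_add esym _ _ h2); last by rewrite !inE eqxx.
    exact: (conn_add esym hC c0C h1).
  have s1 : C' :\: F \subset (C :\: F) :|: [set a; b].
    apply/subsetP => w; rewrite !inE.
    case: (w =P z) => [->|_]; rewrite ?zF ?(negbTE zC) /=;
    by case: (_ \in C); case: (_ \in F); case: (_ == a); case: (_ == b).
  have s2 : z |: (C :&: F) \subset C' :&: F.
    apply/subsetP => w; rewrite !inE.
    case: (w =P z) => [->|_]; rewrite ?zF ?(negbTE zC) /=;
    by case: (_ \in C); case: (_ \in F); case: (_ == a); case: (_ == b).
  have s3 : F :\: C' \subset (F :\: C) :\ z.
    apply/subsetP => w; rewrite !inE.
    case: (w =P z) => [->|_]; rewrite ?zF ?(negbTE zC) /=;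
    by case: (_ \in C); case: (_ \in F); case: (_ == a); case: (_ == b).
  have c1 := subset_leq_card s1.
  have c2 := subset_leq_card s2.
  have c3 := subset_leq_card s3.
  have c4 := cardsU (C :\: F) [set a; b].
  have c5 := cards2 a b.
  have c6 := cardsU1 z (C :&: F).
  have c7 := cardsD1 z (F :\: C).
  have zCF : z \notin C :&: F by rewrite inE (negbTE zC).
  have zFC : z \in F :\: C by rewrite inE zC zF.
  rewrite zCF zFC /= in c6 c7.
  apply: (IH C'); [|exact: hC'|].
    exact: (ar1 hk c3 c7).
  exact: (ar2 hcard c1 c2 c4 c5 c6).
have [F0|[f fF]] := set_0Vmem F.
  exists set0; split; rewrite ?sub0set ?cards0 //.
  by move=> x y; rewrite F0 !inE.
have hf : induced_connected e [set f].
  move=> x y /set1P -> /set1P ->; exact: reach_refl.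
have hfc : #|[set f] :\: F| + 2 <= 2 * #|[set f] :&: F|.
  have -> : [set f] :\: F = set0.
    by apply/setP => w; rewrite !inE; case: (w =P f) => [->|] //=; rewrite ?fF ?andbF.
  have -> : [set f] :&: F = [set f].
    by apply/setIidPl; rewrite sub1set.
  by rewrite cards0 cards1.
have [C [FC hC hcard]] := loop _ [set f] (leqnn _) hf hfc.
exists (C :\: F); split.
- by apply/subsetP => w; rewrite !inE => /andP [].
- have hh : C :&: F = F by apply/setIidPr.
  rewrite hh in hcard; exact: ar3.
- have -> : F :|: C :\: F = C.
    apply/setP => w; rewrite !inE; case: (boolP (w \in F)) => //= wF.
    by rewrite (subsetP FC w wF).
  exact: hC.
Qed.
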